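(* Let $n\ge5$ and $\alpha^*=\bigl(n(n-1)(n-2),-6(n-2),-8\bigr)$. Then for all $v\in\mathbb{C}^{n-1}$, $$Q\,g_{\alpha^*}(Pv)=c_n\,\bigl(v_1T_1(v),\,v_2T_2(v),\dots,v_{n-1}T_{n-1}(v)\bigr)$$ for a nonzero constant $c_n$ depending only on $n$, where $$T_k(v)=v_k^3-\frac{4}{n-1}\,v_k^2\,S_1(\widehat{v_k})+\frac{12}{(n-1)(n-2)}\,v_k\,S_2(\widehat{v_k})-\frac{24}{(n-1)(n-2)(n-4)}\,S_3(\widehat{v_k}).$$ (For $n=8$, after multiplying by $7$, $T_k=7v_k^3-4v_k^2S_1(\widehat{v_k})+2v_kS_2(\widehat{v_k})-S_3(\widehat{v_k})$.)
   Context: For $x\in\mathbb{C}^n$ let $F_k(x)=\sum_{\ell=1}^n x_\ell^k$, $f_k(x)_\ell=F_k(x)-n\,x_\ell^k$, and $g_\alpha=\alpha_1 f_4+\alpha_2F_2f_2+\alpha_3F_3f_1$. Define linear maps $P:\mathbb{C}^{n-1}\to\mathbb{C}^n$ by $(Pv)_i=\bigl(\sum_{j=1}^{n-1}v_j\bigr)-n\,v_i$ for $1\le i\le n-1$ and $(Pv)_n=\sum_{j=1}^{n-1}v_j$, and $Q:\mathbb{C}^n\to\mathbb{C}^{n-1}$ by $(Qx)_i=x_n-x_i$. (These place the $n$-point orbit of $[1-n,1,\dots,1]$ at the coordinate vertices $[1,0,\dots,0],\dots,[0,\dots,0,1]$ and $[1,\dots,1]$.) For $v\in\mathbb{C}^{n-1}$,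 $\widehat{v_k}\in\mathbb{C}^{n-2}$ denotes $v$ with the $k$-th coordinate deleted, and $S_j$ is the $j$-th elementary symmetric polynomial in $n-2$ variables. *)

(* Defs.v *)
From HB Require Import structures.
From mathcomp Require Import all_boot all_order all_algebra.
Set Implicit Arguments. Unset Strict Implicit. Unset Printing Implicit Defensive.
Import Order.TTheory GRing.Theory Num.Theory.
Local Open Scope ring_scope.

(* Vectors in C^N are functions 'I_N -> R; coordinate l (1-based in the
   paper) is index l-1 here. *)
Section Defs.
Variable R : numClosedFieldType.

Definition Fk (N : nat) (k : nat) (x : 'I_N -> R) : R := \sum_(l < N) x l ^+ k.

Definition fk (N : nat) (k : nat) (x : 'I_N -> R) (l : 'I_N) : R :=
  Fk k x - N%:R * x l ^+ k.

Definition g_alpha (N : nat) (a1 a2 a3 : R) (x : 'I_N -> R) (l : 'I_N) : R :=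
  a1 * fk 4 x l + a2 * Fk 2 x * fk 2 x l + a3 * Fk 3 x * fk 1 x l.

(* P : C^m -> C^(m+1) (here n = m+1):
   (Pv)_i = sum_j v_j - n v_i for i <= m, (Pv)_{m+1} = sum_j v_j. *)
Definition Pmap (m : nat) (v : 'I_m -> R) (i : 'I_m.+1) : R :=
  \sum_(j < m) v j - (if unlift ord_max i is Some j then m.+1%:R * v j else 0).

Definition Qmap (m : nat) (x : 'I_m.+1 -> R) (i : 'I_m) : R :=
  x ord_max - x (widen_ord (leqnSn m) i).

Definition S_hat (m : nat) (j : nat) (v : 'I_m -> R) (k : 'I_m) : R :=
  \sum_(A : {set 'I_m} | (#|A| == j) && (k \notin A)) \prod_(i in A) v i.

(* T_k(v), with n the ambient dimension *)
Definition T_k (n : nat) (m : nat) (v : 'I_m -> R) (k : 'I_m) : R :=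
  v k ^+ 3
  - 4%:R / (n.-1)%:R * v k ^+ 2 * S_hat 1 v k
  + 12%:R / ((n.-1)%:R * (n - 2)%:R) * v k * S_hat 2 v k
  - 24%:R / ((n.-1)%:R * (n - 2)%:R * (n - 4)%:R) * S_hat 3 v k.

End Defs.

(* Main.v *)
Require Import Defs.
From HB Require Import structures.
From mathcomp Require Import all_boot all_order all_algebra.
From mathcomp Require Import ring.
Import Order.TTheory GRing.Theory Num.Theory.
Local Open Scope ring_scope.

Section Helpers.
Variable R : numClosedFieldType.
Variable m : nat.
Variable v : 'I_m -> R.

Definition E j (D : {set 'I_m}) : R :=
  \sum_(A : {set 'I_m} | (A \subset D) && (#|A| == j)) \prod_(i in A) v i.
Definition Pw p (D : {set 'I_m}) : R := \sum_(i in D) v i ^+ p.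

Lemma subU1 (a : 'I_m) (B D : {set 'I_m}) : a \notin B -> (B \subset a |: D) = (B \subset D).
Proof.
move=> aB; apply/subsetP/subsetP => H x xB.
  have := H x xB; rewrite !inE => /orP[/eqP ex|//].
  by rewrite -ex xB in aB.
by rewrite !inE H ?orbT.
Qed.

Lemma E0 D : E 0 D = 1.
Proof.
rewrite /E (bigD1 set0) /=; last by rewrite sub0set cards0.
rewrite big_set0 big1 ?addr0 // => A /andP[/andP[_ /eqP/cards0_eq ->]].
by rewrite eqxx.
Qed.

Lemma Eset0 j : E j.+1 set0 = 0.
Proof.
rewrite /E big1 // => A /andP[]; rewrite subset0 => /eqP ->.
by rewrite cards0.
Qed.

Lemma Erec j (a : 'I_m) (D : {set 'I_m}) : a \notin D -> E j.+1 (a |: D) = E j.+1 D + v a * E j D.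
Proof.
move=> aD; rewrite /E (bigID (fun A : {set 'I_m} => a \in A)) /= addrC; congr (_ + _).
  apply: eq_bigl => A; case aA: (a \in A) => /=.
    rewrite andbF; apply/esym/negP => /andP[/subsetP H _].
    by have := H a aA; rewrite (negbTE aD).
  by rewrite andbT subU1 ?aA.
rewrite mulr_sumr (reindex_onto (fun B => a |: B) (fun A => A :\ a)) /=;
  last by move=> A /andP[_ aA]; rewrite setD1K.
apply: eq_big => B.
  case aB: (a \in B).
    have -> : ((a |: B) :\ a == B) = false.
      by apply/negbTE/eqP => e; move: aB; rewrite -e setD11.
    rewrite andbF; apply/esym/negP => /andP[/subsetP H _].
    by have := H a aB; rewrite (negbTE aD).
  rewrite setU1K ?aB // eqxx setU11 !andbT cardsU1 aB add1n eqSS.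
  by rewrite subUset sub1set setU11 /= subU1 ?aB.
move=> /andP[_ /eqP e].
have aB : a \notin B by rewrite -e setD11.
by rewrite big_setU1.
Qed.

Lemma newton D :
  [/\ Pw 1 D = E 1 D, Pw 2 D = E 1 D ^+ 2 - 2 * E 2 D &
      Pw 3 D = E 1 D ^+ 3 - 3 * E 1 D * E 2 D + 3 * E 3 D].
Proof.
move: {2}#|D| (leqnn #|D|) => c; elim: c D => [|c IH] D.
  rewrite leqn0 cards_eq0 => /eqP ->.
  by rewrite /Pw !big_set0 !Eset0; split; ring.
case: (set_0Vmem D) => [->|[a aD]] hc.
  by rewrite /Pw !big_set0 !Eset0; split; ring.
have aD' : a \notin D :\ a by rewrite setD11.
have hc' : (#|D :\ a| <= c)%N.
  by move: hc; rewrite (cardsD1 a D) aD add1n ltnS.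
have [h1 h2 h3] := IH _ hc'.
rewrite -(setD1K aD) /Pw !big_setU1 //= -!/(Pw _ _) h1 h2 h3.
rewrite !Erec // !E0; split; ring.
Qed.

End Helpers.
Arguments E {R m}. Arguments Pw {R m}. Arguments newton {R m}.

Theorem mainTheorem12 (R : numClosedFieldType) (n : nat) (hn : (5 <= n)%N) :
  exists c : R, c != 0 /\
    forall (v : 'I_n.-1 -> R) (k : 'I_n.-1),
      Qmap (g_alpha (n * (n - 1) * (n - 2))%:R (- (6 * (n - 2))%:R) (- 8%:R)
                    (Pmap v)) k
      = c * (v k * T_k n v k).
Proof.
case: n hn => [|[|[|[|[|q]]]]] // _.
exists ((q.+4.+1 ^ 5 * q.+4 * q.+3 * q.+1)%:R); split.
  by rewrite pnatr_eq0 -lt0n !muln_gt0.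
move=> v k /=.
set N : R := (q.+4.+1)%:R.
set s : R := \sum_(j < q.+4) v j.
have hx i : Pmap v (widen_ord (leqnSn _) i) = s - N * v i.
  rewrite /Pmap.
  have -> : widen_ord (leqnSn _) i = lift ord_max i by apply: val_inj; rewrite /= /bump leqNgt ltn_ord.
  by rewrite liftK.
have hmax : Pmap v ord_max = s by rewrite /Pmap unlift_none subr0.
have hF p : Fk p (Pmap v) = \sum_(i < q.+4) (s - N * v i) ^+ p + s ^+ p.
  by rewrite /Fk big_ord_recr /= hmax; congr (_ + _); apply: eq_bigr => i _; rewrite hx.
have hsum c0 c1 c2 c3 : \sum_(i < q.+4) (c0 + c1 * v i + c2 * v i ^+ 2 + c3 * v i ^+ 3)
   = c0 *+ q.+4 + c1 * \sum_i v i + c2 * \sum_i v i ^+ 2 + c3 * \sum_i v i ^+ 3.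
  by rewrite !big_split /= -!mulr_sumr sumr_const card_ord.
have e2 i : (s - N * v i) ^+ 2 = s ^+ 2 + (- (2 * N * s)) * v i + N ^+ 2 * v i ^+ 2 + 0 * v i ^+ 3.
  by clear; move: (v i) s N => a b c; ring.
have e3 i : (s - N * v i) ^+ 3 = s ^+ 3 + (- (3 * N * s ^+ 2)) * v i + (3 * N ^+ 2 * s) * v i ^+ 2 + (- N ^+ 3) * v i ^+ 3.
  by clear; move: (v i) s N => a b c; ring.
have hF2 := hF 2%N; have hF3 := hF 3%N.
rewrite (eq_bigr _ (fun i _ => e2 i)) in hF2.
rewrite (eq_bigr _ (fun i _ => e3 i)) in hF3.
rewrite hsum in hF2; rewrite hsum in hF3.
have hs p : \sum_(i < q.+4) v i ^+ p = v k ^+ p + Pw v p [set~ k].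
  by rewrite (bigD1 k) //=; congr (_ + _); apply: eq_bigl => i; rewrite in_setC1.
have hs1 : s = v k + Pw v 1 [set~ k].
  by rewrite -[v k]expr1 -hs /s; apply: eq_bigr => i _; rewrite expr1.
rewrite -/s !hs in hF2 hF3.
have hS j : S_hat j v k = E v j [set~ k].
  rewrite /S_hat /E; apply: eq_bigl => A; rewrite andbC; congr (_ && _).
  apply/idP/subsetP => [kA x xA|H]; first by rewrite in_setC1; apply/eqP => e; rewrite -e xA in kA.
  by apply/negP => kA; have := H k kA; rewrite in_setC1 eqxx.
rewrite /Qmap /g_alpha /fk hF2 hF3 hmax hx /T_k !hS.
have [h1 h2 h3] := newton v [set~ k].
rewrite hs1 h1 h2 h3 in hF2 hF3 *.
rewrite /N.
have -> : (q.+1.+4 - 1 = q.+4)%N by rewrite subn1.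
have -> : (q.+1.+4 - 2 = q.+3)%N by [].
have -> : (q.+1.+4 - 4 = q.+1)%N by [].
rewrite /=.
move: (Fk 1 _) (Fk 4 _) (E v 1 _) (E v 2 _) (E v 3 _) (v k) => F1 F4 u1 u2 u3 t.
field.
have nz p : (p.+1)%:R + q%:R != 0 :> R by rewrite -natrD pnatr_eq0.
by rewrite (nz 0%N) (nz 2%N) (nz 3%N).
Qed.
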